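(* Let $n\ge 3$ and let $\mu$ be a symmetric measure on $L_n$. If $C^0_\mu<3$, then $$C_\mu=\max\{M_1(\mu),M_2(\mu),C^0_\mu\}.$$
   Context: $L_n$ is the path graph with vertices $\{1,\dots,n\}$ and edges $\{j,j+1\}$, with graph distance $d(i,j)=|i-j|$. A measure $\mu$ on $L_n$ is a weight function $\mu:\{1,\dots,n\}\to(0,\infty)$, $\mu(A)=\sum_{v\in A}\mu(v)$; it is symmetric if $\mu(j)=\mu(n+1-j)$ for all $j$. Closed balls: $B(x,r)=\{y:|x-y|\le r\}$. $C_\mu=\sup\{\mu(B(x,2k+1))/\mu(B(x,k)):1\le x\le n,\ k\in\{0,1,2,\dots\}\}$, $C^0_\mu=\max_x\mu(B(x,1))/\mu(x)$. Define $$M_1(\mu)=\sup\Big\{\frac{\mu(B(1,2k+1))}{\mu(B(1,k))}: k\in\mathbb Z,\ 0\le k<\Big\lceil\frac{n-2}{3}\Big\rceil\Big\},$$ $$M_2(\mu)=\sup\Big\{\frac{\mu(B(j,2k+1))}{\mu(B(j,k))}: j,k\in\mathbb Z,\ 1<j<\Big\lceil\frac n2\Big\rceil,\ \frac{\lceil n/2\rceil-j-1}{2}<k<\min\Big\{\frac{j-2}{2},\Big\lceil\frac{n-2j}{3}\Big\rceil,\Big\lceil\frac n2\Big\rceil-j\Big\}\Big\},$$ with the convention that the supremum of an empty set is $0$. *)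

(* Defs.v *)
From HB Require Import structures.
From mathcomp Require Import all_boot all_order all_algebra.
From mathcomp Require Import boolp classical_sets reals.
Set Implicit Arguments. Unset Strict Implicit. Unset Printing Implicit Defensive.
Import Order.TTheory GRing.Theory Num.Theory.
Local Open Scope ring_scope.
Local Open Scope classical_set_scope.

(* Vertices of L_n are the naturals 1..n; a measure is mu : nat -> R,
   only its values on 1..n matter. Distance d(x,y) = |x - y| (in int). *)

Definition muB {R : realType} (n : nat) (mu : nat -> R) (x r : int) : R :=
  \sum_(1 <= y < n.+1 | `|x - (y%:Z)| <= r) mu y.

Definition is_measure {R : realType} (n : nat) (mu : nat -> R) : Prop :=
  forall j : nat, (1 <= j <= n)%N -> 0 < mu j.

Definition is_symmetric {R : realType} (n : nat) (mu : nat -> R) : Prop :=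
  forall j : nat, (1 <= j <= n)%N -> mu j = mu (n.+1 - j)%N.

Definition Cmu {R : realType} (n : nat) (mu : nat -> R) : R :=
  sup [set t | exists (x k : nat), (1 <= x <= n)%N /\
        t = muB n mu x (2 * k + 1)%N%:Z / muB n mu x k%:Z].

Definition C0mu {R : realType} (n : nat) (mu : nat -> R) : R :=
  sup [set t | exists x : nat, (1 <= x <= n)%N /\ t = muB n mu x 1 / mu x].

Definition iceil {R : realType} (q : R) : int := Num.ceil q.

(* M_1(mu); sup of the empty set is 0 (sup0). *)
Definition M1 {R : realType} (n : nat) (mu : nat -> R) : R :=
  sup [set t | exists k : int,
        0 <= k /\ k < iceil ((n%:R - 2) / 3 : R) /\
        t = muB n mu 1 (2 * k + 1) / muB n mu 1 k].

(* M_2(mu); sup of the empty set is 0 (sup0). *)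
Definition M2 {R : realType} (n : nat) (mu : nat -> R) : R :=
  let hn := iceil (n%:R / 2 : R) in
  sup [set t | exists j k : int,
        1 < j /\ j < hn /\
        ((hn - j - 1)%:~R / 2 : R) < k%:~R /\
        (k%:~R : R) < (j - 2)%:~R / 2 /\
        k < iceil (((n%:Z - 2 * j)%:~R) / 3 : R) /\
        k < hn - j /\
        t = muB n mu j (2 * k + 1) / muB n mu j k].

(* Main.v *)
Require Import Defs.
From HB Require Import structures.
From mathcomp Require Import all_boot all_order all_algebra.
From mathcomp Require Import boolp classical_sets reals.
From mathcomp Require Import zify ring lra.
Import Order.TTheory GRing.Theory Num.Theory.
Local Open Scope ring_scope.

Set Implicit Arguments.
Section Basics.
Variables (R : realType) (n : nat) (mu : nat -> R).
Hypothesis Hmu : is_measure n mu.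
Hypothesis Hsym : is_symmetric n mu.

Definition at_ (i : int) : R := if (0 < i) && (i <= n%:Z) then mu (absz i) else 0.

Lemma at_out i : ~~ ((0 < i) && (i <= n%:Z)) -> at_ i = 0.
Proof. by rewrite /at_ => /negbTE ->. Qed.

Lemma at_ge0 i : 0 <= at_ i.
Proof.
rewrite /at_; case: ifP => // /andP [h1 h2]; apply/ltW/Hmu; lia.
Qed.

Lemma at_pos i : 0 < i -> i <= n%:Z -> 0 < at_ i.
Proof. move=> h1 h2; rewrite /at_ h1 h2 /=; apply/Hmu; lia. Qed.

Lemma at_nat (j : nat) : (1 <= j <= n)%N -> at_ j%:Z = mu j.
Proof. move=> h; rewrite /at_ ifT //; lia. Qed.

Lemma at_sym i : at_ (n%:Z + 1 - i) = at_ i.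
Proof.
rewrite /at_; case: (boolP ((0 < i) && (i <= n%:Z))) => h.
  rewrite ifT; last lia.
  have -> : absz ((n%:Z + 1 - i)%R : int) = (n.+1 - absz i)%N by lia.
  rewrite -Hsym //; lia.
by rewrite ifF //; apply/negbTE; lia.
Qed.

Lemma sum_delta z :
  \sum_(1 <= y < n.+1) (if y%:Z == z then mu y else 0) = at_ z.
Proof.
case: (boolP ((0 < z) && (z <= n%:Z))) => h.
  have [m hm] : exists m : nat, z = m%:Z by exists (absz z); lia.
  subst z.
  rewrite (eq_bigr (fun y => if y == m then mu y else 0)); last first.
    by move=> y _; rewrite eqz_nat.
  rewrite -big_mkcond big_nat1_eq ifT; last lia.
  by rewrite at_nat //; lia.
rewrite at_out // big1_seq // => y; rewrite mem_index_iota => hy.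
rewrite ifF //; apply/negbTE; apply/eqP => hz; move: h; rewrite -hz; lia.
Qed.

Lemma muB_rec x (r : nat) :
  muB n mu x r.+1%:Z = muB n mu x r%:Z + at_ (x - r.+1%:Z) + at_ (x + r.+1%:Z).
Proof.
rewrite /muB big_mkcond [X in X + _ + _]big_mkcond -!sum_delta -!big_split /=.
apply: eq_bigr => y _.
case: (boolP (`|x - y%:Z| <= r%:Z)) => h1.
  rewrite ifT; last lia. rewrite ifF; last (apply/negbTE; lia).
  rewrite ifF; last (apply/negbTE; lia). by rewrite !addr0.
case: (boolP (`|x - y%:Z| <= r.+1%:Z)) => h2.
  case: (boolP (y%:Z == x - r.+1%:Z)) => h3.
    rewrite ifF; last (apply/negbTE; lia). by rewrite add0r addr0.
  rewrite ifT; last lia. by rewrite add0r add0r.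
rewrite ifF; last (apply/negbTE; lia). rewrite ifF; last (apply/negbTE; lia).
by rewrite !addr0.
Qed.

Lemma muB0 x : muB n mu x 0 = at_ x.
Proof.
rewrite /muB -sum_delta big_mkcond; apply: eq_bigr => y _.
by rewrite normr_le0 subr_eq0 eq_sym.
Qed.


Variable c : R.
Hypothesis Hc : forall i : int, 0 < i -> i <= n%:Z -> at_ (i - 1) + at_ i + at_ (i + 1) <= c * at_ i.
Hypothesis Hc3 : c < 3.

Lemma concave i : 0 < i -> i <= n%:Z -> at_ (i - 1) + at_ (i + 1) <= 2 * at_ i.
Proof.
move=> h1 h2; have := Hc i h1 h2; have := at_pos i h1 h2 => hp.
have : c * at_ i <= 3 * at_ i by rewrite ler_pM2r //; apply: ltW.
lra.
Qed.

Definition dl (j : int) := at_ (j + 1) - at_ j.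

Lemma dmono1 j : 0 < j -> j <= n%:Z -> dl j <= dl (j - 1).
Proof. move=> h1 h2; have := concave j h1 h2; rewrite /dl subrK; lra. Qed.

Lemma dmono i (m : nat) : 0 <= i -> i + m%:Z <= n%:Z -> dl (i + m%:Z) <= dl i.
Proof.
move=> h0; elim: m => [|m IH] h; first by rewrite addr0.
apply: le_trans (IH _); last lia.
have -> : i + m%:Z = (i + m.+1%:Z) - 1 by lia.
apply: dmono1; lia.
Qed.

Lemma dmono' i j : 0 <= i -> i <= j -> j <= n%:Z -> dl j <= dl i.
Proof.
move=> h0 h1 h2; have -> : j = i + (absz (j - i))%:Z by lia.
apply: dmono => //; lia.
Qed.

Lemma linup p (m : nat) j : 0 <= j -> j <= p -> p + m%:Z <= n%:Z + 1 ->
  at_ (p + m%:Z) - at_ p <= m%:R * dl j.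
Proof.
move=> h0 h1; elim: m => [|m IH] h; first by rewrite addr0 subrr mul0r.
have e : at_ (p + m.+1%:Z) - at_ p = (at_ (p + m%:Z) - at_ p) + dl (p + m%:Z).
  rewrite /dl; have -> : p + m%:Z + 1 = p + m.+1%:Z by lia. lra.
rewrite e -addn1 natrD mulrDl mul1r; apply: lerD; first by apply: IH; lia.
apply: dmono'; lia.
Qed.

Lemma linlo p (m : nat) j : 0 <= p -> p + m%:Z - 1 <= j -> j <= n%:Z ->
  m%:R * dl j <= at_ (p + m%:Z) - at_ p.
Proof.
move=> h0; elim: m => [|m IH] h1 h2; first by rewrite addr0 subrr mul0r.
have e : at_ (p + m.+1%:Z) - at_ p = (at_ (p + m%:Z) - at_ p) + dl (p + m%:Z).
  rewrite /dl; have -> : p + m%:Z + 1 = p + m.+1%:Z by lia. lra.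
rewrite e -addn1 natrD mulrDl mul1r; apply: lerD; first by apply: IH; lia.
apply: dmono'; lia.
Qed.

Lemma incpos m : 0 <= m -> 2 * m <= n%:Z -> 0 <= dl m.
Proof.
move=> h0 h1.
have e : dl (n%:Z - m) = - dl m.
  rewrite /dl -(at_sym (n%:Z - m + 1)) -(at_sym (n%:Z - m)).
  have -> : n%:Z + 1 - (n%:Z - m + 1) = m by lia.
  have -> : n%:Z + 1 - (n%:Z - m) = m + 1 by lia.
  lra.
have := dmono' m (n%:Z - m) h0 (_ : m <= n%:Z - m) (_ : n%:Z - m <= n%:Z).
rewrite e; move=> H; have {}H := H ltac:(lia) ltac:(lia); lra.
Qed.

Lemma mono_aux i j : 0 <= i -> i <= j -> 2 * (j - 1) <= n%:Z -> at_ i <= at_ j.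
Proof.
move=> h0 h1 h2.
have := @linlo i (absz (j - i)) (j - 1) h0 ltac:(lia) ltac:(lia).
have -> : i + (absz (j - i))%:Z = j by lia.
have := incpos (j - 1) (_ : 0 <= j - 1) h2.
case: (j =P i) => [-> | hne]; first by lra.
move=> H; have {}H := H ltac:(lia).
have : 0 <= (absz (j - i))%:R * dl (j - 1) by apply: mulr_ge0.
lra.
Qed.

Lemma mono i j : 0 <= i -> i <= j -> i + j <= n%:Z + 1 -> at_ i <= at_ j.
Proof.
move=> h0 h1 h2.
case: (boolP (2 * (j - 1) <= n%:Z)) => h3; first exact: mono_aux.
rewrite -(at_sym j); apply: mono_aux; lia.
Qed.


Section P1.
Variable x : int.
Definition Mx (r : nat) := muB n mu x r%:Z.
Definition G (t : nat) := at_ (x - t%:Z) + at_ (x + t%:Z).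

Lemma Mrec r : Mx r.+1 = Mx r + G r.+1.
Proof. by rewrite /Mx muB_rec /G -addrA. Qed.

Lemma Msum r : Mx r = at_ x + \sum_(1 <= t < r.+1) G t.
Proof.
elim: r => [|r IH]; first by rewrite /Mx muB0 big_geq // addr0.
by rewrite Mrec IH [in RHS]big_nat_recr //= [RHS]addrA.
Qed.

Lemma Mx_split k m : Mx (k + m) = Mx k + \sum_(k.+1 <= t < (k + m).+1) G t.
Proof.
elim: m => [|m IH]; first by rewrite addn0 big_geq // addr0.
rewrite addnS Mrec IH [in RHS]big_nat_recr; last lia.
by rewrite [RHS]addrA.
Qed.

Lemma N_eq i : muB n mu i 1 = at_ (i - 1) + at_ i + at_ (i + 1).
Proof. have := muB_rec i 0; rewrite muB0 /= => ->; lra. Qed.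

Lemma cert (k : nat) : 0 < x - k%:Z -> x + k%:Z <= n%:Z ->
  3 * Mx k - G k + G k.+1 <= c * Mx k.
Proof.
elim: k => [|k IH] h1 h2.
  rewrite /Mx muB0 /G !addr0 ?subr0 /=.
  have := Hc x ltac:(lia) ltac:(lia).
  have -> : x - 1%:Z = x - 1 by []. lra.
have {}IH := IH ltac:(lia) ltac:(lia).
have HL := Hc (x - k.+1%:Z) ltac:(lia) ltac:(lia).
have HR := Hc (x + k.+1%:Z) ltac:(lia) ltac:(lia).
have e1 : x - k.+1%:Z - 1 = x - k.+2%:Z by lia.
have e2 : x - k.+1%:Z + 1 = x - k%:Z by lia.
have e3 : x + k.+1%:Z - 1 = x + k%:Z by lia.
have e4 : x + k.+1%:Z + 1 = x + k.+2%:Z by lia.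
rewrite e1 e2 in HL; rewrite e3 e4 in HR.
rewrite Mrec; move: IH HL HR; rewrite /G; lra.
Qed.

Definition D k := Num.max (dl (x + k%:Z)) 0.

Lemma D_ge0 k : 0 <= D k.
Proof. by rewrite /D le_max lexx orbT. Qed.

Hypothesis hx : 2 * x <= n%:Z + 1.

Lemma F1 (k t : nat) : (t <= k)%N -> 0 <= x - k%:Z -> x + k%:Z < n%:Z -> G k <= G t.
Proof.
move=> htk h1 h2.
have A := linlo (x - k%:Z) (k - t) (x + t%:Z) h1 ltac:(lia) ltac:(lia).
have B := linup (x + t%:Z) (k - t) (x + t%:Z) ltac:(lia) (lexx _) ltac:(lia).
have eQ1 : x - k%:Z + (k - t)%N%:Z = x - t%:Z by lia. rewrite eQ1 in A.
have eQ2 : x + t%:Z + (k - t)%N%:Z = x + k%:Z by lia. rewrite eQ2 in B.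
rewrite /G; lra.
Qed.

Lemma F2 (k t : nat) : (k <= t)%N -> 1 <= x - k%:Z -> x + k%:Z < n%:Z ->
  G t <= G k + (t - k)%N%:R * D k.
Proof.
move=> htk h1 h2.
have hD := D_ge0 k.
have hm : 0 <= (t - k)%N%:R * D k by apply: mulr_ge0.
have R1 : at_ (x + t%:Z) <= at_ (x + k%:Z) + (t - k)%N%:R * D k.
  case: (boolP (x + t%:Z <= n%:Z + 1)) => h3.
    have B := linup (x + k%:Z) (t - k) (x + k%:Z) ltac:(lia) (lexx _) ltac:(lia).
    have eQ3 : x + k%:Z + (t - k)%N%:Z = x + t%:Z by lia. rewrite eQ3 in B.
    have : (t - k)%N%:R * dl (x + k%:Z) <= (t - k)%N%:R * D k.
      apply: ler_wpM2l => //; rewrite /D le_max lexx //.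
    lra.
  rewrite at_out; last lia.
  have := at_ge0 (x + k%:Z); lra.
case: (boolP (0 <= x - t%:Z)) => h3.
  have A := linlo (x - t%:Z) (t - k) (x - k%:Z - 1) h3 ltac:(lia) ltac:(lia).
  have eQ4 : x - t%:Z + (t - k)%N%:Z = x - k%:Z by lia. rewrite eQ4 in A.
  have d1 := dmono' (x - k%:Z - 1) (x + k%:Z) ltac:(lia) ltac:(lia) ltac:(lia).
  have d2 := incpos (x - k%:Z - 1) ltac:(lia) ltac:(lia).
  have : (t - k)%N%:R * D k <= (t - k)%N%:R * dl (x - k%:Z - 1).
    apply: ler_wpM2l => //; rewrite /D ge_max d1 d2 //.
  rewrite /G; lra.
rewrite /G at_out; last lia.
have := at_ge0 (x - k%:Z); lra.
Qed.

Lemma P1 (k : nat) : (1 <= k)%N -> 2 + k%:Z <= x ->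
  Mx (2 * k + 1) <= c * Mx k.
Proof.
move=> hk h1.
have h2 : x + k%:Z < n%:Z by lia.
apply: le_trans (cert k ltac:(lia) ltac:(lia)).
have S1 : Mx (2 * k + 1) = Mx k + G k.+1 + \sum_(k.+2 <= t < (2 * k + 1).+1) G t.
  have -> : (2 * k + 1 = k + k.+1)%N by lia.
  rewrite Mx_split (big_ltn (_ : k.+1 < (k + k.+1).+1)%N); last lia.
  by rewrite addrA.
have S2 : Mx k = at_ x + \sum_(1 <= t < k.+1) G t by apply: Msum.
have T1 : k%:R * G k <= \sum_(1 <= t < k.+1) G t.
  have -> : k%:R * G k = \sum_(1 <= t < k.+1) G k.
    by rewrite sumr_const_nat subn1 /= mulr_natl.
  apply: ler_sum_nat => t /andP [ht1 ht2]; apply: F1; lia.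
have T2 : \sum_(k.+2 <= t < (2 * k + 1).+1) G t <= k%:R * (G k + k.+1%:R * D k).
  have -> : k%:R * (G k + k.+1%:R * D k) =
     \sum_(k.+2 <= t < (2 * k + 1).+1) (G k + k.+1%:R * D k).
    by rewrite sumr_const_nat mulr_natl; congr (_ *+ _); lia.
  apply: ler_sum_nat => t /andP [ht1 ht2].
  apply: le_trans (F2 k t _ _ _) _; try lia.
  apply: lerD => //; apply: ler_wpM2r; first exact: D_ge0.
  rewrite ler_nat; lia.
have T3 : k%:R * k.+1%:R * D k <= 2 * at_ x + (k.-1)%:R * G k.
  have hD := D_ge0 k.
  have [a ha] : exists a : nat, x = a%:Z by exists (absz x); lia.
  have A : a%:R * D k <= at_ x.
    case: (lerP 0 (dl (x + k%:Z))) => hd.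
      have L : a%:R * dl (x + k%:Z) <= at_ (0 + a%:Z) - at_ 0 by apply: linlo; lia.
      have e0 : at_ 0 = 0 by apply: at_out; lia.
      rewrite e0 subr0 add0r -ha in L.
      by rewrite /D max_l.
    rewrite /D max_r; last exact: ltW.
    by rewrite mulr0 at_ge0.
  have B : (a + k)%N%:R * D k <= G k.
    case: (lerP 0 (dl (x + k%:Z))) => hd.
      have L : (a + k)%N%:R * dl (x + k%:Z) <= at_ (0 + (a + k)%N%:Z) - at_ 0 by apply: linlo; lia.
      have e0 : at_ 0 = 0 by apply: at_out; lia.
      have eQ : 0 + (a + k)%N%:Z = x + k%:Z by lia.
      rewrite e0 subr0 eQ in L.
      rewrite /D max_l // /G; have := at_ge0 (x - k%:Z); lra.
    rewrite /D max_r; last exact: ltW.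
    rewrite mulr0 /G; have := at_ge0 (x - k%:Z); have := at_ge0 (x + k%:Z); lra.
  have B' : (k.-1)%:R * ((a + k)%N%:R * D k) <= (k.-1)%:R * G k.
    by apply: ler_wpM2l.
  have C : k%:R * k.+1%:R * D k <= (2 * a + k.-1 * (a + k))%N%:R * D k.
    rewrite -natrM; apply: ler_wpM2r => //; rewrite ler_nat; nia.
  move: C; rewrite natrD !natrM mulrDl -mulrA. lra.
have hDk : 0 <= D k := D_ge0 k.
have e : (k.-1)%:R = k%:R - 1 :> R by rewrite -[in RHS](prednK hk) -natr1 addrK.
rewrite S1 S2; move: T1 T2 T3; rewrite e; nra.
Qed.

End P1.


Lemma Mpos (x : int) r : 0 < x -> x <= n%:Z -> 0 < muB n mu x r%:Z.
Proof.
move=> h1 h2; rewrite -/(Mx x r) Msum.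
have := at_pos x h1 h2.
have : 0 <= \sum_(1 <= t < r.+1) G x t.
  apply: sumr_ge0 => t _; rewrite /G; apply: addr_ge0; exact: at_ge0.
lra.
Qed.

Definition Q (m : nat) := \sum_(1 <= i < m.+1) at_ i%:Z.

Lemma M1Q r : muB n mu 1 r%:Z = Q r.+1.
Proof.
elim: r => [|r IH].
  by rewrite muB0 /Q big_nat1.
rewrite muB_rec IH /Q [in RHS]big_nat_recr //= (at_out (1 - _)); last lia.
rewrite addr0; congr (_ + at_ _); lia.
Qed.

Lemma Q_split s : Q (2 * s) = Q s + \sum_(1 <= i < s.+1) at_ ((2 * s + 1)%N%:Z - i%:Z).
Proof.
rewrite /Q (@big_cat_nat _ _ _ s.+1 1 (2 * s).+1) //=; last lia.
congr (_ + _).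
have -> : (s.+1 = 1 + s)%N by lia.
rewrite big_addn.
have -> : ((2 * s).+1 - s = s.+1)%N by lia.
rewrite [in RHS]big_nat_rev /=.
apply: eq_big_nat => i hi; congr at_; lia.
Qed.

Lemma term_bound s i : (1 <= s)%N -> (n <= 3 * s + 2)%N -> (2 * s + 1 <= n)%N ->
  (1 <= i <= s)%N ->
  (at_ (2 * s + 1)%N%:Z + at_ (2 * s + 2)%N%:Z) * at_ i%:Z <=
  at_ s.+1%:Z * (at_ i%:Z + at_ ((2 * s + 1)%N%:Z - i%:Z)).
Proof.
move=> hs h3 h2 hi.
have hai := at_ge0 i%:Z.
have hs1 := at_ge0 s.+1%:Z.
have m1 : at_ i%:Z <= at_ ((2 * s + 1)%N%:Z - i%:Z) by apply: mono; lia.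
have eu : at_ (2 * s + 1)%N%:Z = at_ (n%:Z - (2 * s)%N%:Z).
  rewrite -at_sym; congr at_; lia.
have ev : at_ (2 * s + 2)%N%:Z = at_ (n%:Z - (2 * s)%N%:Z - 1).
  rewrite -at_sym; congr at_; lia.
case: (ltnP n (3 * s + 2)) => hn.
  have mu1 : at_ (2 * s + 1)%N%:Z <= at_ s.+1%:Z by rewrite eu; apply: mono; lia.
  have mv1 : at_ (2 * s + 2)%N%:Z <= at_ s.+1%:Z by rewrite ev; apply: mono; lia.
  have := ler_wpM2r hai (lerD mu1 mv1).
  have : at_ s.+1%:Z * at_ i%:Z <= at_ s.+1%:Z * at_ ((2 * s + 1)%N%:Z - i%:Z).
    by apply: ler_wpM2l.
  lra.
have en : n = (3 * s + 2)%N by lia.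
have eu' : at_ (2 * s + 1)%N%:Z = at_ s.+2%:Z by rewrite eu; congr at_; lia.
have ev' : at_ (2 * s + 2)%N%:Z = at_ s.+1%:Z by rewrite ev; congr at_; lia.
rewrite eu' ev'.
have hs2 := at_ge0 s.+2%:Z.
have hs0 := at_ge0 s%:Z.
have cv := concave s.+1%:Z ltac:(lia) ltac:(lia).
have e1 : s.+1%:Z - 1 = s%:Z by lia.
have e2 : s.+1%:Z + 1 = s.+2%:Z by lia.
rewrite e1 e2 in cv.
have mi : at_ i%:Z <= at_ s%:Z by apply: mono; lia.
have mj : at_ s.+1%:Z <= at_ ((2 * s + 1)%N%:Z - i%:Z) by apply: mono; lia.
have A1 : at_ s.+2%:Z * at_ i%:Z <= at_ s.+2%:Z * at_ s%:Z by apply: ler_wpM2l.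
have A2 : at_ s.+2%:Z * at_ s%:Z <= at_ s.+1%:Z * at_ s.+1%:Z.
  have : 0 <= (at_ s.+2%:Z - at_ s%:Z) ^+ 2 by apply: sqr_ge0.
  have : (at_ s%:Z + at_ s.+2%:Z) ^+ 2 <= (2 * at_ s.+1%:Z) ^+ 2.
    by rewrite ler_sqr ?nnegrE; try lra.
  nra.
have A3 : at_ s.+1%:Z * at_ s.+1%:Z <= at_ s.+1%:Z * at_ ((2 * s + 1)%N%:Z - i%:Z).
  by apply: ler_wpM2l.
lra.
Qed.

Lemma step_prod s : (1 <= s)%N -> (n <= 3 * s + 2)%N ->
  Q (2 * s.+1) * Q s <= Q (2 * s) * Q s.+1.
Proof.
move=> hs h3.
have e1 : Q (2 * s.+1) = Q (2 * s) + at_ (2 * s + 1)%N%:Z + at_ (2 * s + 2)%N%:Z.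
  rewrite /Q (_ : (2 * s.+1).+1 = (2 * s).+3)%N; last lia.
  rewrite [in LHS]big_nat_recr //= [in LHS]big_nat_recr //=.
  congr (_ + at_ _ + at_ _); lia.
have e2 : Q s.+1 = Q s + at_ s.+1%:Z by rewrite /Q big_nat_recr.
rewrite e1 e2.
suff : (at_ (2 * s + 1)%N%:Z + at_ (2 * s + 2)%N%:Z) * Q s <= Q (2 * s) * at_ s.+1%:Z.
  lra.
case: (ltnP n (2 * s + 1)) => h2.
  have u0 : at_ (2 * s + 1)%N%:Z = 0 by apply: at_out; lia.
  have v0 : at_ (2 * s + 2)%N%:Z = 0 by apply: at_out; lia.
  rewrite u0 v0 addr0 mul0r; apply: mulr_ge0; last exact: at_ge0.
  apply: sumr_ge0 => i _; exact: at_ge0.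
rewrite Q_split /Q -big_split /= big_distrr /= big_distrl /=.
apply: ler_sum_nat => i hi.
rewrite [X in _ <= X]mulrC; apply: term_bound => //; lia.
Qed.


Lemma muB_symm x r : muB n mu (n%:Z + 1 - x) r%:Z = muB n mu x r%:Z.
Proof.
elim: r => [|r IH]; first by rewrite !muB0 at_sym.
rewrite !muB_rec IH.
have e1 : at_ (n%:Z + 1 - x - r.+1%:Z) = at_ (x + r.+1%:Z).
  rewrite -(at_sym (x + _)); congr at_; lia.
have e2 : at_ (n%:Z + 1 - x + r.+1%:Z) = at_ (x - r.+1%:Z).
  rewrite -(at_sym (x - _)); congr at_; lia.
rewrite e1 e2; lra.
Qed.

Lemma ball_left_eq (x k : nat) : (1 <= x <= k.+1)%N ->
  muB n mu x%:Z k%:Z = muB n mu 1 (x + k - 1)%N%:Z.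
Proof.
move=> h; rewrite /muB big_mkcond [RHS]big_mkcond.
apply: eq_big_nat => y hy; rewrite ifE; congr (if _ then _ else _); lia.
Qed.

Lemma ball_left_le (x k : nat) : (1 <= x)%N ->
  muB n mu x%:Z (2 * k + 1)%N%:Z <= muB n mu 1 (2 * (x + k - 1) + 1)%N%:Z.
Proof.
move=> h; rewrite /muB big_mkcond [X in _ <= X]big_mkcond.
apply: ler_sum_nat => y hy.
have hm : 0 <= mu y by apply/ltW/Hmu; lia.
case: ifP => h1; last by case: ifP.
rewrite ifT //; lia.
Qed.

Definition rr (x : int) (k : nat) := muB n mu x (2 * k + 1)%N%:Z / muB n mu x k%:Z.

Hypothesis hn1 : (1 <= n)%N.

Lemma chain_step k : (n <= 3 * k.+1 + 2)%N -> rr 1 k.+1 <= rr 1 k.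
Proof.
move=> h.
have e1 : rr 1 k.+1 = Q (2 * k.+2) / Q k.+2.
  by rewrite /rr !M1Q; congr (Q _ / _); lia.
have e2 : rr 1 k = Q (2 * k.+1) / Q k.+1.
  by rewrite /rr !M1Q; congr (Q _ / _); lia.
have Qpos m : 0 < Q m.+1 by rewrite -M1Q; apply: Mpos; lia.
rewrite e1 e2 ler_pdivrMr // mulrAC ler_pdivlMr //.
by apply: step_prod; lia.
Qed.

Lemma chain K0 k : (n <= 3 * K0 + 5)%N -> (K0 <= k)%N -> rr 1 k <= rr 1 K0.
Proof.
move=> h; elim: k => [|k IH] hk.
  by have -> : K0 = 0%N by lia.
case: (ltnP K0 k.+1) => hk'.
  apply: le_trans (IH _); last lia.
  apply: chain_step; lia.
by have -> : K0 = k.+1 by lia.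
Qed.

Lemma rr_left (x k : nat) : (1 <= x <= k.+1)%N -> (x <= n)%N -> rr x%:Z k <= rr 1 (x + k - 1)%N.
Proof.
move=> h hxn; rewrite /rr (ball_left_eq x k h).
have hp : 0 < muB n mu 1 (x + k - 1)%N%:Z by apply: Mpos; lia.
apply: ler_wpM2r; first by rewrite invr_ge0 ltW.
apply: ball_left_le; lia.
Qed.

Lemma main_bound (x k : nat) (B1 : R) :
  (forall k' : nat, (3 * k' + 2 < n)%N -> rr 1 k' <= B1) ->
  (3 <= n)%N -> (1 <= x <= n)%N -> rr x%:Z k <= Num.max B1 c.
Proof.
move=> HB hn3 hx.
have hcB : forall t, t <= c -> t <= Num.max B1 c.
  by move=> t ht; rewrite le_max ht orbT.
have hBB : forall t, t <= B1 -> t <= Num.max B1 c.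
  by move=> t ht; rewrite le_max ht.
case: k => [|k].
  apply: hcB; rewrite /rr muB0 (N_eq x) /=.
  have hp := at_pos x ltac:(lia) ltac:(lia).
  rewrite ler_pdivrMr //; apply: Hc; lia.
wlog hx2 : x hx / (2 * x <= n + 1)%N.
  move=> W; case: (leqP (2 * x) (n + 1)) => h; first exact: W.
  have -> : rr x%:Z k.+1 = rr (n.+1 - x)%N%:Z k.+1.
    rewrite /rr -[in LHS](muB_symm x%:Z) -[in LHS](muB_symm x%:Z).
    by congr (muB _ _ _ _ / muB _ _ _ _); lia.
  apply: W; lia.
case: (leqP (k.+3) x) => h3.
  apply: hcB; rewrite /rr.
  have hp : 0 < muB n mu x k.+1%:Z by apply: Mpos; lia.
  rewrite ler_pdivrMr //.
  have := P1 (x%:Z) ltac:(lia) k.+1 ltac:(lia) ltac:(lia).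
  rewrite /Mx; apply.
apply: le_trans (rr_left _ _ _ _) _; [lia | lia |].
set k' := (x + k.+1 - 1)%N.
case: (ltnP (3 * k' + 2) n) => h4; first by apply: hBB; apply: HB.
apply: hBB; apply: le_trans (chain ((n - 3) %/ 3) k' _ _) (HB _ _); lia.
Qed.


Lemma Mge (x : int) r : at_ x <= muB n mu x r%:Z.
Proof.
rewrite -/(Mx x r) Msum.
have : 0 <= \sum_(1 <= t < r.+1) G x t.
  apply: sumr_ge0 => t _; rewrite /G; apply: addr_ge0; exact: at_ge0.
lra.
Qed.

Lemma muB_le_Tot x r : muB n mu x r <= \sum_(1 <= y < n.+1) mu y.
Proof.
rewrite /muB big_mkcond; apply: ler_sum_nat => y hy.
have hm : 0 <= mu y by apply/ltW/Hmu; lia.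
by case: ifP.
Qed.

End Basics.

Lemma single_le_sum (R : realType) (n : nat) (F : nat -> R) (j : nat) :
  (forall y, (1 <= y <= n)%N -> 0 <= F y) -> (1 <= j <= n)%N ->
  F j <= \sum_(1 <= y < n.+1) F y.
Proof.
move=> hF hj.
have e : \sum_(1 <= y < n.+1 | y == j) F y = F j by rewrite big_nat1_eq ifT //; lia.
rewrite -e big_mkcond /=; apply: ler_sum_nat => y hy; case: ifP => // _; apply: hF; lia.
Qed.

Theorem theorem5p1 (R : realType) (n : nat) (mu : nat -> R) :
  (3 <= n)%N -> is_measure n mu -> is_symmetric n mu ->
  C0mu n mu < 3 ->
  Cmu n mu = Num.max (M1 n mu) (Num.max (M2 n mu) (C0mu n mu)).
Proof.
move=> hn3 Hmu Hsym Hc3.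
have hn1 : (1 <= n)%N by lia.
pose Tot := \sum_(1 <= y < n.+1) mu y.
pose Bd := Tot * \sum_(1 <= y < n.+1) (mu y)^-1.
have hTot : 0 <= Tot.
  rewrite /Tot big_nat_cond; apply: sumr_ge0 => y /andP [hy _]; apply/ltW/Hmu; lia.
have ratio_bd : forall (x r r' : int), 0 < x -> x <= n%:Z -> 0 <= r ->
    muB n mu x r' / muB n mu x r <= Bd.
  move=> x r r' h1 h2 h3.
  have [rn ->] : exists rn : nat, r = rn%:Z by exists (absz r); lia.
  have [xn ex] : exists xn : nat, x = xn%:Z by exists (absz x); lia.
  have hx : (1 <= xn <= n)%N by lia.
  have hp : 0 < mu xn by apply: Hmu.
  have A : mu xn <= muB n mu x rn%:Z.
    by rewrite -(at_nat R n mu xn hx) ex; apply: Mge.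
  have B : muB n mu x r' <= Tot by apply: (muB_le_Tot Hmu _ Hc3 hn1).
  have C : (mu xn)^-1 <= \sum_(1 <= y < n.+1) (mu y)^-1.
    apply: (@single_le_sum R n (fun y => (mu y)^-1)) => // y hy.
    by rewrite invr_ge0; apply/ltW/Hmu.
  have hb : 0 < muB n mu x rn%:Z by apply: lt_le_trans A.
  apply: (@le_trans _ _ (Tot / mu xn)).
    rewrite ler_pdivrMr //; apply: le_trans B _.
    rewrite -{1}(divfK (_ : mu xn != 0) Tot) ?gt_eqF //.
    apply: ler_wpM2l => //; apply: divr_ge0 => //; exact: ltW.
  by apply: ler_wpM2l.
set c := C0mu n mu.
have C0ub : has_ubound [set t | exists x : nat, (1 <= x <= n)%N /\ t = muB n mu x 1 / mu x]%classic.
  exists Bd => t [x [hx ->]].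
  rewrite -(at_nat R n mu x hx) -muB0; apply: ratio_bd; lia.
have Hc : forall i : int, 0 < i -> i <= n%:Z ->
    at_ R n mu (i - 1) + at_ R n mu i + at_ R n mu (i + 1) <= c * at_ R n mu i.
  move=> i h1 h2.
  have [m em] : exists m : nat, i = m%:Z by exists (absz i); lia.
  subst i.
  have hm : (1 <= m <= n)%N by lia.
  have el : muB n mu m 1 / mu m <= c.
    by apply: (ub_le_sup C0ub); exists m.
  rewrite -N_eq at_nat //; rewrite ler_pdivrMr in el => //; exact: Hmu.
have Hc3' : c < 3 by [].
have MB := main_bound Hmu Hsym c Hc Hc3' hn1.
set CS := [set t | exists x k : nat, (1 <= x <= n)%N /\
        t = muB n mu x (2 * k + 1)%N%:Z / muB n mu x k%:Z]%classic.
have hCSub : has_ubound CS.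
  exists Bd => t [x [k [hx ->]]]; apply: ratio_bd; lia.
have hCS : forall t, CS t -> t <= Cmu n mu by apply: ub_le_sup.
have rr10 : 0 < rr R n mu 1 0.
  rewrite /rr; apply: divr_gt0; apply: (Mpos Hmu); lia.
have CSrr : CS (rr R n mu 1 0) by exists 1%N, 0%N.
have Cpos : 0 < Cmu n mu by apply: lt_le_trans rr10 (hCS _ CSrr).
have HB1 : forall k' : nat, (3 * k' + 2 < n)%N -> rr R n mu 1 k' <= M1 n mu.
  move=> k' hk'.
  rewrite /M1; apply: ub_le_sup.
    exists Bd => t [k [hk0 [_ ->]]]; apply: ratio_bd; lia.
  exists k'%:Z; split; first by [].
  split.
    rewrite /iceil ltNge ceil_le_int -ltNge.
    have : (k' * 3 + 2)%:R < n%:R :> R by rewrite ltr_nat; lia.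
    rewrite natrD natrM => H.
    rewrite ltr_pdivlMr //.
    have -> : (k'%:Z)%:~R = k'%:R :> R by reflexivity.
    lra.
  rewrite /rr; congr (muB _ _ _ _ / _); lia.
apply/eqP; rewrite eq_le; apply/andP; split.
  rewrite /Cmu; apply: ge_sup; first by exists (rr R n mu 1 0); exists 1%N, 0%N.
  move=> t [x [k [hx ->]]].
  apply: le_trans (MB x k (M1 n mu) HB1 hn3 hx) _.
  rewrite ge_max; apply/andP; split; rewrite le_max ?lexx //.
  by apply/orP; right; rewrite le_max lexx orbT.
rewrite ge_max; apply/andP; split.
  rewrite /M1; apply: ge_sup.
    exists (rr R n mu 1 0); exists 0; split; first by [].
    split; last by [].
    rewrite /iceil ltNge ceil_le0 -ltNge.
    have : 2%:R < n%:R :> R by rewrite ltr_nat; lia.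
    move=> H; apply: divr_gt0; lra.
  move=> t [k [hk0 [_ ->]]]; apply: hCS.
  exists 1%N, (absz k); split; first lia.
  congr (muB _ _ _ _ / muB _ _ _ _); lia.
rewrite ge_max; apply/andP; split.
  rewrite /M2 /=.
  set M2S := (X in sup X).
  case: (pselect (M2S !=set0)%classic) => hne; last first.
    by rewrite sup_out; [exact: ltW | case].
  apply: ge_sup => //.
  move=> t [j [k [hj1 [hj2 [hk1 [hk2 [hk3 [hk4 ->]]]]]]]]; apply: hCS.
  set hn := iceil (n%:R / 2 : R) in hj2 hk1 hk4.
  have hnn : hn <= n%:Z.
    rewrite /hn /iceil ceil_le_int.
    have -> : (n%:Z)%:~R = n%:R :> R by reflexivity.
    have : 0 <= n%:R :> R by [].
    lra.
  have hk0 : 0 < k.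
    rewrite -(ltr0z R).
    apply: le_lt_trans hk1.
    apply: divr_ge0 => //; rewrite ler0z; lia.
  exists (absz j), (absz k); split; first lia.
  congr (muB _ _ _ _ / muB _ _ _ _); lia.
rewrite /c /C0mu; apply: ge_sup.
  by exists (muB n mu 1%N 1 / mu 1%N); exists 1%N; split.
move=> t [x [hx ->]]; apply: hCS.
exists x, 0%N; split => //.
by rewrite muB0 at_nat.
Qed.
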